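(* Let $\mathcal A$ be a linear time-invariant algorithm with $n$ oracles, state-space realization $(A,B,C,D)$ and transfer function $\hat H(z)$, let $\kappa\subseteq[n]$ with complement $\bar\kappa=[n]\setminus\kappa$, and suppose $D[\kappa]$ is invertible. Let $P$ be a permutation matrix reordering the oracle indices so that those in $\kappa$ come first, i.e. $$P\hat H(z)P^T=\begin{bmatrix}\hat H[\kappa](z)&\hat H[\kappa,\bar\kappa](z)\\ \hat H[\bar\kappa,\kappa](z)&\hat H[\bar\kappa](z)\end{bmatrix}.$$ Then $\mathcal B=\mathcal C_\kappa\mathcal A$ if and only if the transfer function $\hat H'(z)$ of $\mathcal B$ satisfies $$P\hat H'(z)P^T=\begin{bmatrix}\hat H[\kappa]^{-1}(z) & -\hat H[\kappa]^{-1}(z)\hat H[\kappa,\bar\kappa](z)\\ \hat H[\bar\kappa,\kappa](z)\hat H[\kappa]^{-1}(z) & \hat H[\bar\kappa](z)-\hat H[\bar\kappa,\kappa](z)\hat H[\kappa]^{-1}(z)\hat H[\kappa,\bar\kappa](z)\end{bmatrix}.$$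
   Context: A linear time-invariant algorithm with realization $(A,B,C,D)$ generates $x^{k+1}=Ax^k+Bu^k$, $y^k=Cx^k+Du^k$, $u^k=\phi(y^k)$; its transfer function is $\hat H(z)=C(zI-A)^{-1}B+D$. All oracles are assumed to be (sub)gradients $\partial f_i$ of convex functions, $i\in[n]=\{1,\dots,n\}$ (prox oracles being rewritten via $u=\mathrm{prox}_f(y)\iff y\in u+\partial f(u)$). For a matrix $M$ indexed by $[n]$ (blockwise, per oracle), $M[\kappa,\nu]$ is the submatrix with rows indexed by $\kappa$ and columns by $\nu$, and $M[\kappa]=M[\kappa,\kappa]$. The conjugation $\mathcal C_\kappa\mathcal A$ is the algorithm obtained by rewriting $\mathcal A$ to call, for each $i\in\kappa$, the oracle $\partial f_i^\star=(\partial f_i)^{-1}$ (with $f^\star$ the Fenchel conjugate) instead of $\partial f_i$; for oracles in $\kappa$ the roles of oracle argument and oracle output are swapped. Two algorithms are also called conjugates if they are oracle-equivalent to such a pair. *)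

(* Defs.v *)
From HB Require Import structures.
From mathcomp Require Import all_boot all_order all_algebra.
Set Implicit Arguments. Unset Strict Implicit. Unset Printing Implicit Defensive.
Import Order.TTheory GRing.Theory Num.Theory.
Local Open Scope ring_scope.

Definition ratfun (R : fieldType) := {fraction {poly R}}.

Definition liftc (R : fieldType) (c : R) : ratfun R := tofrac (c%:P).
Definition zvar (R : fieldType) : ratfun R := tofrac 'X.

Definition transfer (R : fieldType) (nx m : nat)
  (A : 'M[R]_nx) (B : 'M[R]_(nx, m)) (C : 'M[R]_(m, nx)) (D : 'M[R]_m)
  : 'M[ratfun R]_m :=
  map_mx (@liftc R) C *m invmx ((zvar R)%:M - map_mx (@liftc R) A)
    *m map_mx (@liftc R) B + map_mx (@liftc R) D.

Definition coords (n m : nat) (owner : 'I_m -> 'I_n) (kappa : {set 'I_n})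
  : {set 'I_m} := [set j | owner j \in kappa].

(* Submatrix M[K,L] (rows in K, columns in L, in increasing order). *)
Definition subm (T : Type) (m : nat) (M : 'M[T]_m) (K L : {set 'I_m})
  : 'M[T]_(#|K|, #|L|) :=
  \matrix_(i, j) M (enum_val i) (enum_val j).

(* Selection matrix S_K : 'M_(#|K|, m), so that M[K,L] = S_K M S_L^T. *)
Definition selmx (R : fieldType) (m : nat) (K : {set 'I_m}) : 'M[R]_(#|K|, m) :=
  \matrix_(i, j) (enum_val i == j)%:R.

Definition projmx (R : fieldType) (m : nat) (K : {set 'I_m}) : 'M[R]_m :=
  \matrix_(i, j) ((i == j) && (i \in K))%:R.

(* Conjugation C_K of the LTI algorithm (A,B,C,D) with respect to the oracle
   coordinates K (requires D[K] invertible).  For coordinates in K the roles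
   of oracle argument y and oracle output u are swapped: writing
   E := D[K]^{-1}, L := complement of K, one solves
     u_K = E (y_K - C_K x - D[K,L] u_L),
   and the new algorithm has input u' = (y_K, u_L) and output y' = (u_K, y_L),
   each kept in the original coordinate positions. *)
Section Conj.
Variables (R : fieldType) (nx m : nat) (K : {set 'I_m}).
Variables (A : 'M[R]_nx) (B : 'M[R]_(nx, m)) (C : 'M[R]_(m, nx)) (D : 'M[R]_m).

Definition conjG : 'M[R]_m :=
  (selmx R K)^T *m invmx (selmx R K *m D *m (selmx R K)^T) *m selmx R K.

Definition conjA : 'M[R]_nx := A - B *m conjG *m C.
Definition conjB : 'M[R]_(nx, m) :=
  B *m (conjG + projmx R (~: K) - conjG *m D *m projmx R (~: K)).
Definition conjC : 'M[R]_(m, nx) :=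
  projmx R (~: K) *m C - conjG *m C - projmx R (~: K) *m D *m conjG *m C.
Definition conjD : 'M[R]_m :=
  conjG - conjG *m D *m projmx R (~: K) + projmx R (~: K) *m D *m conjG
  + projmx R (~: K) *m (D - D *m conjG *m D) *m projmx R (~: K).
End Conj.

Definition oracle_equiv (R : fieldType) (nx1 nx2 m : nat)
  (A1 : 'M[R]_nx1) (B1 : 'M[R]_(nx1, m)) (C1 : 'M[R]_(m, nx1)) (D1 : 'M[R]_m)
  (A2 : 'M[R]_nx2) (B2 : 'M[R]_(nx2, m)) (C2 : 'M[R]_(m, nx2)) (D2 : 'M[R]_m) :=
  transfer A1 B1 C1 D1 = transfer A2 B2 C2 D2.

Definition is_conjugate (R : fieldType) (n nx nx2 m : nat) (owner : 'I_m -> 'I_n)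
  (kappa : {set 'I_n})
  (A : 'M[R]_nx) (B : 'M[R]_(nx, m)) (C : 'M[R]_(m, nx)) (D : 'M[R]_m)
  (A2 : 'M[R]_nx2) (B2 : 'M[R]_(nx2, m)) (C2 : 'M[R]_(m, nx2)) (D2 : 'M[R]_m) :=
  let K := coords owner kappa in
  oracle_equiv A2 B2 C2 D2 (conjA K A B C D) (conjB K B D) (conjC K C D) (conjD K D).

(* Main.v *)
Require Import Defs.
From HB Require Import structures.
From mathcomp Require Import all_boot all_order all_algebra.
Import GRing.Theory.
Local Open Scope ring_scope.

Section Sel.
Variables (F : fieldType) (m : nat).
Implicit Types (K L : {set 'I_m}).

Lemma sel_selT K : selmx F K *m (selmx F K)^T = 1%:M.
Proof.
apply/matrixP=> i j; rewrite !mxE (bigD1 (enum_val i)) //= big1 => [|k /negbTE nk].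
  by rewrite !mxE eqxx mul1r addr0 eq_sym (inj_eq enum_val_inj).
by rewrite !mxE eq_sym nk mul0r.
Qed.

Lemma sel_selCT K : selmx F K *m (selmx F (~: K))^T = 0.
Proof.
apply/matrixP=> i j; rewrite !mxE big1 // => k _; rewrite !mxE.
have := enum_valP i; have := enum_valP j; rewrite inE.
case: eqP => [<-|]; last by rewrite mul0r.
by case: eqP => [<- /negP//|]; rewrite mulr0.
Qed.

Lemma selC_selT K : selmx F (~: K) *m (selmx F K)^T = 0.
Proof.
apply/matrixP=> i j; rewrite !mxE big1 // => k _; rewrite !mxE.
have := enum_valP i; have := enum_valP j; rewrite inE.
case: eqP => [<-|]; last by rewrite mul0r.
by case: eqP => [<- _ /negP//|]; rewrite mulr0.
Qed.

Lemma selT_sel K : (selmx F K)^T *m selmx F K = projmx F K.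
Proof.
apply/matrixP=> i j; rewrite !mxE.
rewrite (eq_bigr (fun k => ((enum_val k == i)%:R * (enum_val k == j)%:R : F)));
  last by move=> k _; rewrite !mxE.
rewrite -(big_enum_val (fun x => ((x == i)%:R * (x == j)%:R : F))) /=.
rewrite big_mkcond (bigD1 i) //= big1 => [|k /negbTE nk]; last by rewrite nk mul0r if_same.
rewrite eqxx mul1r addr0 eq_sym.
by case: (i \in K); rewrite ?andbT ?andbF.
Qed.

Lemma projmxC K : projmx F K + projmx F (~: K) = 1%:M.
Proof.
apply/matrixP=> i j; rewrite !mxE inE.
by case: (i \in K); case: (i == j); rewrite /= ?addr0 ?add0r.
Qed.

Lemma subm_sel (M : 'M[F]_m) K L : subm M K L = selmx F K *m M *m (selmx F L)^T.
Proof.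
apply/matrixP=> i j; rewrite !mxE.
rewrite (bigD1 (enum_val j)) //= big1 => [|k /negbTE nk]; last by rewrite !mxE eq_sym nk mulr0.
rewrite !mxE eqxx mulr1 addr0.
rewrite (bigD1 (enum_val i)) //= big1 => [|k /negbTE nk]; last by rewrite !mxE eq_sym nk mul0r.
by rewrite !mxE eqxx mul1r addr0.
Qed.
End Sel.

Lemma map_selmx (R S : fieldType) (f : {rmorphism R -> S}) m (K : {set 'I_m}) :
  map_mx f (selmx R K) = selmx S K.
Proof. by apply/matrixP=> i j; rewrite !mxE rmorph_nat. Qed.

Lemma map_projmx (R S : fieldType) (f : {rmorphism R -> S}) m (K : {set 'I_m}) :
  map_mx f (projmx R K) = projmx S K.
Proof. by apply/matrixP=> i j; rewrite !mxE rmorph_nat. Qed.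

Lemma core_alg (R : pzRingType) (nx m : nat) (A Zm Phi Phi' : 'M[R]_nx) (B : 'M[R]_(nx, m))
  (C : 'M[R]_(m, nx)) (D Q P g : 'M[R]_m) :
  Q + P = 1%:M -> P *m Q = 0 -> P *m P = P -> g *m Q = g -> Q *m g = g -> g *m P = 0 ->
  g *m D *m Q = Q ->
  (Zm - A) *m Phi = 1%:M -> Phi' *m (Zm - (A - B *m g *m C)) = 1%:M ->
  let H := C *m Phi *m B + D in
  let Y := g + P - g *m D *m P in
  ((P *m C - (Q + P *m D) *m g *m C) *m Phi' *m (B *m Y) + (Q + P *m D) *m Y) *m (Q *m H + P)
   = Q + P *m H.
Proof.
move=> QP1 PQ PP GQ QG GP GDQ hPhi hPhi' H Y.
set X := Phi *m B.
set W := C *m X.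
have HX : H = W + D by rewrite /H /W /X mulmxA.
have YQ : Y *m Q = g.
  by rewrite /Y mulmxBl mulmxDl GQ PQ -mulmxA PQ mulmx0 addr0 subr0.
have YP : Y *m P = P - g *m D *m P.
  by rewrite /Y mulmxBl mulmxDl GP PP -mulmxA PP add0r.
have GD : g *m D = Q + g *m D *m P.
  by rewrite -{1}(mulmx1 (g *m D)) -QP1 mulmxDr GDQ.
have step1 : Y *m (Q *m H + P) = 1%:M + g *m W.
  rewrite mulmxDr mulmxA YQ YP HX mulmxDr {1}GD -QP1.
  by rewrite -addrA addrACA subrr addr0 addrC.
have step2 : (Zm - (A - B *m g *m C)) *m X = B *m Y *m (Q *m H + P).
  rewrite -[B *m Y *m _]mulmxA step1 mulmxDr mulmx1.
  have -> : Zm - (A - B *m g *m C) = (Zm - A) + B *m g *m C.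
    by rewrite opprB addrA addrAC.
  by rewrite mulmxDl /X mulmxA hPhi mul1mx -/X /W !mulmxA.
have step3 : X = Phi' *m (B *m Y) *m (Q *m H + P).
  by rewrite -mulmxA -step2 mulmxA hPhi' mul1mx.
rewrite mulmxDl.
have -> : (P *m C - (Q + P *m D) *m g *m C) *m Phi' *m (B *m Y) *m (Q *m H + P)
   = (P *m C - (Q + P *m D) *m g *m C) *m X by rewrite step3 !mulmxA.
rewrite -[(Q + P *m D) *m Y *m _]mulmxA step1 mulmxDr mulmx1 HX.
have e1 : (Q + P *m D) *m g *m C *m X = (Q + P *m D) *m (g *m W) by rewrite /W !mulmxA.
have e2 : P *m C *m X = P *m W by rewrite /W mulmxA.
by rewrite mulmxBl e2 e1 addrACA addNr addr0 addrCA mulmxDr.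
Qed.

Lemma block_alg (R : comUnitRingType) (k l m : nat) (S : 'M[R]_(k, m)) (SL : 'M[R]_(l, m))
  (T M : 'M[R]_m) :
  S *m S^T = 1%:M -> SL *m SL^T = 1%:M -> S *m SL^T = 0 -> SL *m S^T = 0 ->
  T *m (S^T *m S *m M + SL^T *m SL) = S^T *m S + SL^T *m SL *m M ->
  [/\ S *m T *m S^T = invmx (S *m M *m S^T),
      S *m T *m SL^T = - (invmx (S *m M *m S^T) *m (S *m M *m SL^T)),
      SL *m T *m S^T = SL *m M *m S^T *m invmx (S *m M *m S^T)
    & SL *m T *m SL^T = SL *m M *m SL^T - SL *m M *m S^T *m invmx (S *m M *m S^T) *m (S *m M *m SL^T)].
Proof.
move=> h1 h2 h3 h4 e.
have h1' p (X : 'M_(k, p)) : S *m (S^T *m X) = X by rewrite mulmxA h1 mul1mx.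
have h2' p (X : 'M_(l, p)) : SL *m (SL^T *m X) = X by rewrite mulmxA h2 mul1mx.
have h3' p (X : 'M_(l, p)) : S *m (SL^T *m X) = 0 by rewrite mulmxA h3 mul0mx.
have h4' p (X : 'M_(k, p)) : SL *m (S^T *m X) = 0 by rewrite mulmxA h4 mul0mx.
have E p q (U : 'M_(p, m)) (V : 'M_(q, m)) : U *m T *m (S^T *m S *m M + SL^T *m SL) *m V^T
   = U *m (S^T *m S + SL^T *m SL *m M) *m V^T by rewrite -(mulmxA U) e.
have eKK := E _ _ S S; have eKL := E _ _ S SL; have eLK := E _ _ SL S; have eLL := E _ _ SL SL.
move: eKK eKL eLK eLL.
rewrite !(mulmxDl, mulmxDr) -!mulmxA !(h1', h2', h3', h4', h1, h2, h3, h4) !(mulmx0, mul0mx, addr0, add0r).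
rewrite ?mulmx1 => eKK eKL eLK eLL.
have fKK : (S *m T *m S^T) *m (S *m M *m S^T) = 1%:M by move: eKK; rewrite !mulmxA.
have fKL : (S *m T *m S^T) *m (S *m M *m SL^T) + S *m T *m SL^T = 0
  by move: eKL; rewrite !mulmxA.
have fLK : (SL *m T *m S^T) *m (S *m M *m S^T) = SL *m M *m S^T
  by move: eLK; rewrite !mulmxA.
have fLL : (SL *m T *m S^T) *m (S *m M *m SL^T) + SL *m T *m SL^T = SL *m M *m SL^T
  by move: eLL; rewrite !mulmxA.
have [_ uK] := mulmx1_unit fKK.
have ea : S *m T *m S^T = invmx (S *m M *m S^T).
  by rewrite -[LHS]mulmx1 -(mulmxV uK) mulmxA fKK mul1mx.
have ec : SL *m T *m S^T = SL *m M *m S^T *m invmx (S *m M *m S^T).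
  by rewrite -fLK -[RHS]mulmxA mulmxV // mulmx1.
rewrite ea in fKL; rewrite ec in fLL.
rewrite !mulmxA in ea ec fKL fLL *.
split; [exact: ea| |exact: ec|].
- by apply/eqP; move/eqP: fKL; rewrite addrC addr_eq0.
- by apply/eqP; rewrite eq_sym subr_eq -fLL addrC.
Qed.
Section Core.
Variables (F : fieldType) (nx m : nat) (K : {set 'I_m}).
Variables (A : 'M[F]_nx) (B : 'M[F]_(nx, m)) (C : 'M[F]_(m, nx)) (D : 'M[F]_m).
Hypothesis hK : selmx F K *m D *m (selmx F K)^T \in unitmx.
Local Notation S := (selmx F K).
Local Notation SL := (selmx F (~: K)).
Local Notation Q := (projmx F K).
Local Notation P := (projmx F (~: K)).
Local Notation G := (conjG K D).

Lemma LQP1 : Q + P = 1%:M. Proof. exact: projmxC. Qed.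
Lemma LSQ : S *m Q = S. Proof. by rewrite -selT_sel mulmxA sel_selT mul1mx. Qed.
Lemma LQST : Q *m S^T = S^T. Proof. by rewrite -selT_sel -mulmxA sel_selT mulmx1. Qed.
Lemma LSP : S *m P = 0. Proof. by rewrite -selT_sel mulmxA sel_selCT mul0mx. Qed.
Lemma LPST : P *m S^T = 0. Proof. by rewrite -selT_sel -mulmxA selC_selT mulmx0. Qed.
Lemma LPP : P *m P = P.
Proof. by rewrite -selT_sel mulmxA -(mulmxA _ (selmx F _)) sel_selT mulmx1. Qed.
Lemma LQP : Q *m P = 0. Proof. by rewrite -selT_sel -mulmxA LSP mulmx0. Qed.
Lemma LPQ : P *m Q = 0.
Proof. by rewrite -(@selT_sel F m K) mulmxA (LPST) mul0mx. Qed.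
Lemma LGQ : G *m Q = G. Proof. by rewrite /conjG -mulmxA LSQ. Qed.
Lemma LQG : Q *m G = G. Proof. by rewrite /conjG !mulmxA LQST. Qed.
Lemma LGP : G *m P = 0. Proof. by rewrite /conjG -mulmxA LSP mulmx0. Qed.
Lemma LPG : P *m G = 0. Proof. by rewrite /conjG !mulmxA LPST !mul0mx. Qed.
Lemma LGDQ : G *m D *m Q = Q.
Proof.
rewrite /conjG -selT_sel -!mulmxA; congr (_ *m _).
by have := mulVmx hK; rewrite !mulmxA => ->; rewrite mul1mx.
Qed.

Lemma conjCE : conjC K C D = P *m C - (Q + P *m D) *m G *m C.
Proof. rewrite /conjC !mulmxDl. rewrite (LQG). by rewrite opprD addrA !mulmxA. Qed.

Lemma conjDE : conjD K D = (Q + P *m D) *m (G + P - G *m D *m P).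
Proof.
rewrite /conjD; move: (LQG) (LQP); move: (conjG K D) => g hQG hQP.
by rewrite !(mulmxDl, mulmxDr, mulmxBr, mulmxBl, mulmxN, mulNmx) !mulmxA !hQG hQP addr0 !addrA.
Qed.

Lemma conjBE : conjB K B D = B *m (G + P - G *m D *m P). Proof. by []. Qed.
Lemma conjAE : conjA K A B C D = A - B *m G *m C. Proof. by []. Qed.

End Core.

Lemma block_ext_alg (R : pzRingType) (k l m : nat) (S : 'M[R]_(k, m)) (SL : 'M[R]_(l, m))
  (M N : 'M[R]_m) :
  S^T *m S + SL^T *m SL = 1%:M ->
  S *m M *m S^T = S *m N *m S^T -> S *m M *m SL^T = S *m N *m SL^T ->
  SL *m M *m S^T = SL *m N *m S^T -> SL *m M *m SL^T = SL *m N *m SL^T -> M = N.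
Proof.
move=> hs e1 e2 e3 e4.
have dec X : X = S^T *m (S *m X *m S^T) *m S + S^T *m (S *m X *m SL^T) *m SL
   + SL^T *m (SL *m X *m S^T) *m S + SL^T *m (SL *m X *m SL^T) *m SL.
  rewrite -[X in LHS]mul1mx -[X in LHS]mulmx1 -hs !(mulmxDl, mulmxDr) !mulmxA.
  by rewrite !addrA.
by rewrite (dec M) (dec N) e1 e2 e3 e4.
Qed.

Section Maps.
Variables (R S : fieldType) (f : {rmorphism R -> S}).
Variables (nx m : nat) (K : {set 'I_m}).
Variables (A : 'M[R]_nx) (B : 'M[R]_(nx, m)) (C : 'M[R]_(m, nx)) (D : 'M[R]_m).

Lemma map_conjG : map_mx f (conjG K D) = conjG K (map_mx f D).
Proof. by rewrite /conjG !map_mxM map_invmx !map_mxM -!map_trmx !map_selmx. Qed.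
Lemma map_conjA : map_mx f (conjA K A B C D) = conjA K (map_mx f A) (map_mx f B) (map_mx f C) (map_mx f D).
Proof. by rewrite /conjA -map_conjG !(map_mxM, map_mxB). Qed.
Lemma map_conjB : map_mx f (conjB K B D) = conjB K (map_mx f B) (map_mx f D).
Proof. by rewrite /conjB -map_conjG -(@map_projmx _ _ f) !(map_mxM, map_mxD, map_mxB, map_mxN). Qed.
Lemma map_conjC : map_mx f (conjC K C D) = conjC K (map_mx f C) (map_mx f D).
Proof. by rewrite /conjC -map_conjG -(@map_projmx _ _ f) !(map_mxM, map_mxD, map_mxB, map_mxN). Qed.
Lemma map_conjD : map_mx f (conjD K D) = conjD K (map_mx f D).
Proof. by rewrite /conjD -map_conjG -(@map_projmx _ _ f) !(map_mxM, map_mxD, map_mxB, map_mxN). Qed.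
End Maps.

Definition lf (R : fieldType) : R -> ratfun R := (@tofrac _ \o polyC).

Lemma zunit (R : fieldType) n (A : 'M[R]_n) :
  (zvar R)%:M - map_mx (@lf R) A \in unitmx.
Proof.
have -> : (zvar R)%:M - map_mx (@lf R) A = map_mx (@tofrac _) (char_poly_mx A).
  by rewrite /char_poly_mx map_mxB map_scalar_mx -map_mx_comp.
by rewrite unitmxE unitfE det_map_mx tofrac_eq0 monic_neq0 // char_poly_monic.
Qed.

Lemma core_id (F : fieldType) (nx m : nat) (K : {set 'I_m}) (A Zm : 'M[F]_nx)
  (B : 'M[F]_(nx, m)) (C : 'M[F]_(m, nx)) (D : 'M[F]_m) :
  selmx F K *m D *m (selmx F K)^T \in unitmx -> Zm - A \in unitmx ->
  Zm - conjA K A B C D \in unitmx ->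
  let H := C *m invmx (Zm - A) *m B + D in
  let T := conjC K C D *m invmx (Zm - conjA K A B C D) *m conjB K B D + conjD K D in
  T *m (projmx F K *m H + projmx F (~: K)) = projmx F K + projmx F (~: K) *m H.
Proof.
move=> hK hA hA' H T.
rewrite /T conjCE conjDE conjBE; rewrite conjAE in hA' *.
apply: (@core_alg F) => //; [exact: LQP1 | exact: LPQ | exact: LPP | exact: LGQ | exact: LQG | exact: LGP | exact: LGDQ | exact: (mulmxV hA) | exact: (mulVmx hA')].
Qed.

Lemma blocks (F : fieldType) m (K : {set 'I_m}) (T M : 'M[F]_m) :
  T *m (projmx F K *m M + projmx F (~: K)) = projmx F K + projmx F (~: K) *m M ->
  [/\ subm T K K = invmx (subm M K K),
      subm T K (~: K) = - (invmx (subm M K K) *m subm M K (~: K)),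
      subm T (~: K) K = subm M (~: K) K *m invmx (subm M K K)
    & subm T (~: K) (~: K) = subm M (~: K) (~: K)
        - subm M (~: K) K *m invmx (subm M K K) *m subm M K (~: K)].
Proof.
rewrite !subm_sel -!selT_sel => e.
apply: (@block_alg F _ _ _ (selmx F K) (selmx F (~: K))); [exact: sel_selT | exact: sel_selT | exact: sel_selCT | exact: selC_selT | exact: e].
Qed.

Lemma blocks_ext (F : fieldType) m (K : {set 'I_m}) (M N : 'M[F]_m) :
  subm M K K = subm N K K -> subm M K (~: K) = subm N K (~: K) ->
  subm M (~: K) K = subm N (~: K) K -> subm M (~: K) (~: K) = subm N (~: K) (~: K) ->
  M = N.
Proof.
rewrite !subm_sel; apply: block_ext_alg.
by rewrite !selT_sel projmxC.
Qed.

Lemma lf_unitmx (R : fieldType) n (M : 'M[R]_n) :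
  (map_mx (@lf R) M \in unitmx) = (M \in unitmx).
Proof. exact: map_unitmx. Qed.

Theorem proposition8p1 (R : fieldType) (n m nx nx2 : nat) (owner : 'I_m -> 'I_n)
  (A : 'M[R]_nx) (B : 'M[R]_(nx, m)) (C : 'M[R]_(m, nx)) (D : 'M[R]_m)
  (A2 : 'M[R]_nx2) (B2 : 'M[R]_(nx2, m)) (C2 : 'M[R]_(m, nx2)) (D2 : 'M[R]_m)
  (kappa : {set 'I_n}) :
  let K := coords owner kappa in
  let L := ~: K in
  subm D K K \in unitmx ->
  let H := transfer A B C D in
  let H' := transfer A2 B2 C2 D2 in
  (is_conjugate owner kappa A B C D A2 B2 C2 D2 <->
   [/\ subm H' K K = invmx (subm H K K),
       subm H' K L = - (invmx (subm H K K) *m subm H K L),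
       subm H' L K = subm H L K *m invmx (subm H K K)
     & subm H' L L = subm H L L - subm H L K *m invmx (subm H K K) *m subm H K L]).
Proof.
move=> K L hK H H'.
pose f := @lf R.
have hK' : selmx _ K *m map_mx f D *m (selmx _ K)^T \in unitmx.
  rewrite -(@map_selmx _ _ f) map_trmx -!map_mxM lf_unitmx.
  by rewrite -subm_sel.
have hA' : (zvar R)%:M - conjA K (map_mx f A) (map_mx f B) (map_mx f C) (map_mx f D) \in unitmx.
  by rewrite -map_conjA; exact: (@zunit _ _ _).
have CI := @core_id _ _ _ _ _ _ _ _ _ hK' (@zunit _ _ A) hA'.
have TE : transfer (conjA K A B C D) (conjB K B D) (conjC K C D) (conjD K D) =
   conjC K (map_mx f C) (map_mx f D) *m
     invmx ((zvar R)%:M - conjA K (map_mx f A) (map_mx f B) (map_mx f C) (map_mx f D)) *m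
     conjB K (map_mx f B) (map_mx f D) + conjD K (map_mx f D).
  by rewrite -map_conjA -map_conjB -map_conjC -map_conjD.
have BL := @blocks _ _ _ _ _ CI.
split.
- rewrite /is_conjugate /oracle_equiv -/K => hc.
  rewrite /H' hc TE; exact: BL.
- case=> e1 e2 e3 e4.
  rewrite /is_conjugate /oracle_equiv -/K TE.
  case: BL => f1 f2 f3 f4.
  apply: blocks_ext.
  + exact: (etrans e1 (esym f1)).
  + exact: (etrans e2 (esym f2)).
  + exact: (etrans e3 (esym f3)).
  + exact: (etrans e4 (esym f4)).
Qed.
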